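(* Let $\mathcal{H}\subseteq\mathcal{F}$ be saturated fusion systems over a finite $p$-group $S$, let $P\le S$ be fully $\mathcal{F}$-normalized and let $\mathcal{N}:=N_{\mathcal{F}}(P)\cap\mathcal{H}$. Then $N_{\mathcal{H}}(P)\subseteq\mathcal{N}$, and the morphisms of $\mathcal{N}$ and $N_{\mathcal{H}}(P)$ between $\mathcal{F}$-centric subgroups coincide. In particular $\mathcal{O}_{\mathcal{C}}(\mathcal{N})=\mathcal{O}_{\mathcal{C}}(N_{\mathcal{H}}(P))$ for every family $\mathcal{C}$ of $\mathcal{F}$-centric subgroups of $S$.
   Context: $P$ is fully $\mathcal{F}$-normalized if $|N_S(P)|\ge|N_S(Q)|$ for all $\mathcal{F}$-conjugates $Q$ of $P$. $N_{\mathcal{F}}(P)$ is the fusion system over $N_S(P)$ whose morphisms $A\to B$ are those $\varphi\in\operatorname{Hom}_{\mathcal{F}}(A,B)$ extending to some $\hat\varphi\in\operatorname{Hom}_{\mathcal{F}}(AP,BP)$ with $\hat\varphi(P)=P$; similarly $N_{\mathcal{H}}(P)$. $\mathcal{N}=N_{\mathcal{F}}(P)\cap\mathcal{H}$ is the fusion system over $N_S(P)$ whose morphisms are those lying in both $N_{\mathcal{F}}(P)$ and $\mathcal{H}$. A subgroup is $\mathcal{F}$-centric if $C_S(Q)\le Q$ for all its $\mathcal{F}$-conjugates $Q$. $\mathcal{O}_{\mathcal{C}}(\mathcal{E})$ is the full subcategory on $\mathcal{C}$ (intersected with the subgroups of the base group of $\mathcal{E}$) of the orbit category of $\mathcal{E}$,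 whose morphisms are $\operatorname{Aut}_Q(Q)\backslash\operatorname{Hom}_{\mathcal{E}}(R,Q)$. *)

(* Defs.v *)
From mathcomp Require Import all_boot all_fingroup.
From mathcomp Require Import automorphism pgroup.

Set Implicit Arguments.
Unset Strict Implicit.
Unset Printing Implicit Defensive.

Local Open Scope group_scope.

Section FusionDefs.

Variable gT : finGroupType.

(* A morphism with domain A is represented by a finite function gT -> gT
   that is trivial (= 1) outside A; this makes the representation unique.
   A morphism A -> B (B any subgroup containing the image) is a morphism
   with domain A whose image is contained in B. *)
Local Notation mor := {ffun gT -> gT}.

(* A fusion system (predicate): [F A f] means f is an F-morphism with
   domain A (and codomain S, hence any subgroup containing f @: A). *)
Definition fsys := {set gT} -> mor -> bool.

Definition restrm (A : {set gT}) (f : gT -> gT) : mor :=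
  [ffun x => if x \in A then f x else 1].

Definition conjmor (A : {set gT}) (s : gT) : mor := restrm A (fun x => x ^ s).

Definition inj_hom (A : {set gT}) (f : mor) : Prop :=
  [/\ {in A &, {morph f : x y / x * y}}, {in A &, injective f}
    & {in ~: A, forall x, f x = 1}].

Definition homset (F : fsys) (A B : {set gT}) : {set mor} :=
  [set f : mor | F A f && (f @: A \subset B)].

Record fusion_system (S : {group gT}) (F : fsys) : Prop := FusionSystem {
  fs_dom : forall A f, F A f ->
    [/\ group_set A, A \subset S, f @: A \subset S & inj_hom A f];
  fs_conj : forall (A : {group gT}) s, A \subset S -> s \in S ->
    F A (conjmor A s);
  fs_comp : forall A B f g, F A f -> F B g -> f @: A \subset B ->
    F A (restrm A (g \o f));
  fs_inv : forall A f, F A f ->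
    exists g, F (f @: A) g /\ {in A, forall x, g (f x) = x}
}.

(* Q' is an F-conjugate of Q iff Q' = f @: Q for some F-morphism f with
   domain Q. *)
Definition fully_normalized (S : {group gT}) (F : fsys) (Q : {set gT}) :=
  Q \subset S /\ forall f, F Q f -> #|'N_S(f @: Q)| <= #|'N_S(Q)|.

Definition fully_centralized (S : {group gT}) (F : fsys) (Q : {set gT}) :=
  Q \subset S /\ forall f, F Q f -> #|'C_S(f @: Q)| <= #|'C_S(Q)|.

Definition centric (S : {group gT}) (F : fsys) (Q : {set gT}) :=
  Q \subset S /\ forall f, F Q f -> 'C_S(f @: Q) \subset f @: Q.

(* Aut_F(Q) and Aut_S(Q) as groups of automorphisms of Q (permutations of
   gT fixing everything outside Q, cf. MathComp's Aut). *)
Definition AutF (F : fsys) (Q : {set gT}) : {set {perm gT}} :=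
  [set a in Aut Q | F Q (restrm Q a)].

Definition AutS (S : {group gT}) (Q : {set gT}) : {set {perm gT}} :=
  [set a in Aut Q | [exists s in 'N_S(Q), restrm Q a == conjmor Q s]].

(* N_phi = { g in N_S(Q) | phi c_g phi^-1 in Aut_S(phi(Q)) } *)
Definition Nphi (S : {group gT}) (Q : {set gT}) (f : mor) : {set gT} :=
  [set g in 'N_S(Q) |
     [exists h in 'N_S(f @: Q), [forall x in Q, f (x ^ g) == (f x) ^ h]]].

Definition saturated (p : nat) (S : {group gT}) (F : fsys) : Prop :=
  (forall Q : {group gT}, fully_normalized S F Q ->
     fully_centralized S F Q /\ p.-Sylow(AutF F Q) (AutS S Q)) /\
  (forall (Q : {group gT}) f, F Q f -> fully_centralized S F (f @: Q) ->
     exists g, F (Nphi S Q f) g /\ restrm Q g = f).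

(* N_F(P): fusion system over N_S(P); phi : A -> B is a morphism iff
   A, B <= N_S(P), phi in Hom_F(A,B) and phi extends to some
   phihat in Hom_F(AP, BP) with phihat(P) = P. (In the domain representation
   the target B is phi(A).) *)
Definition normalizer_fsys (S : {group gT}) (F : fsys) (P : {set gT}) : fsys :=
  fun A f =>
    [&& A \subset 'N_S(P), f @: A \subset 'N_S(P), F A f &
        [exists g : mor,
           [&& F (A * P) g, g @: (A * P) \subset (f @: A) * P,
               g @: P == P & restrm A g == f]]].

Definition fsys_cap (F1 F2 : fsys) : fsys := fun A f => F1 A f && F2 A f.

(* Morphism set Aut_Q(Q) \ Hom_E(R, Q) of the orbit category of E:
   orbits of Hom_E(R,Q) under post-composition with conjugations by Q. *)
Definition orbit_hom (E : fsys) (R Q : {set gT}) : {set {set mor}} :=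
  [set [set restrm R (fun x => f x ^ q) | q in Q] | f : mor in homset E R Q].

End FusionDefs.

(* Main.v *)
Require Import Defs.
From mathcomp Require Import all_boot all_fingroup pgroup.
From mathcomp Require Import automorphism nilpotent sylow cyclic center.

Set Implicit Arguments.
Unset Strict Implicit.
Unset Printing Implicit Defensive.
Local Open Scope group_scope.
Notation restrm := Defs.restrm.

Section Basics.
Variable gT : finGroupType.
Local Notation mor := {ffun gT -> gT}.
Variable S : {group gT}.
Variable F : fsys gT.
Hypothesis fsF : fusion_system S F.

Lemma restrm_in (A : {set gT}) f x : x \in A -> restrm A f x = f x.
Proof. by rewrite /restrm ffunE => ->. Qed.
Lemma restrm_out (A : {set gT}) f x : x \notin A -> restrm A f x = 1.
Proof. by rewrite /restrm ffunE => /negbTE->. Qed.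

Lemma morM A f : F A f -> {in A &, {morph f : x y / x * y}}.
Proof. by case/(fs_dom fsF)=> _ _ _ []. Qed.
Lemma mor_inj A f : F A f -> {in A &, injective f}.
Proof. by case/(fs_dom fsF)=> _ _ _ []. Qed.
Lemma mor_out A f x : F A f -> x \notin A -> f x = 1.
Proof. by case/(fs_dom fsF)=> _ _ _ [_ _ H] xA; apply: H; rewrite inE. Qed.
Lemma mor_subS A f : F A f -> A \subset S.
Proof. by case/(fs_dom fsF). Qed.
Lemma mor_imS A f : F A f -> f @: A \subset S.
Proof. by case/(fs_dom fsF). Qed.
Lemma mor_gs A f : F A f -> group_set A.
Proof. by case/(fs_dom fsF). Qed.

Lemma restrm_id A f : F A f -> restrm A f = f.
Proof.
move=> FAf; apply/ffunP=> x; case: (boolP (x \in A)) => xA.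
  by rewrite restrm_in.
by rewrite restrm_out // (mor_out FAf).
Qed.

Lemma F_restr (A B : {group gT}) f : F A f -> B \subset A -> F B (restrm B f).
Proof.
move=> FAf sBA.
have sBS : B \subset S := subset_trans sBA (mor_subS FAf).
have := fs_conj fsF sBS (group1 S).
move=> Fc; have := fs_comp fsF Fc FAf.
have -> : restrm B (f \o conjmor B 1) = restrm B f.
  by apply/ffunP=> x; rewrite !ffunE; case: ifP => // xB /=; rewrite /conjmor restrm_in // conjg1.
apply; apply/subsetP=> _ /imsetP[x xB ->]; rewrite /conjmor restrm_in // conjg1.
exact: (subsetP sBA).
Qed.

Lemma F_id (A : {group gT}) : A \subset S -> F A (restrm A id).
Proof.
move=> sAS; have := fs_conj fsF sAS (group1 S).
suff -> : conjmor A 1 = restrm A id by [].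
by apply/ffunP=> x; rewrite !ffunE conjg1.
Qed.

Definition morF (A : {group gT}) f (FAf : F A f) : {morphism A >-> gT} :=
  Morphism (morM FAf).

Lemma morFE (A : {group gT}) f (FAf : F A f) : morF FAf @* A = f @: A.
Proof. by rewrite morphimEdom. Qed.

Lemma morF_inj (A : {group gT}) f (FAf : F A f) : 'injm (morF FAf).
Proof. by apply/injmP; apply: mor_inj FAf. Qed.

Lemma F_comp_img A B f g : F A f -> F B g -> f @: A \subset B ->
  restrm A (g \o f) @: A = g @: (f @: A).
Proof.
move=> FAf FBg sfAB; rewrite -imset_comp; apply: eq_in_imset => x xA.
by rewrite restrm_in.
Qed.


Lemma centric_img A f : centric S F A -> F A f -> centric S F (f @: A).
Proof.
move=> [sAS cA] FAf; split; first exact: mor_imS FAf.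
move=> g Fg; have := fs_comp fsF FAf Fg (subxx _).
by move/cA; rewrite (F_comp_img FAf Fg (subxx _)).
Qed.


Lemma centric_subG (A : {group gT}) : centric S F A -> 'C_S(A) \subset A.
Proof.
move=> [sAS cA]; have := cA _ (F_id sAS).
suff -> : restrm A id @: A = A by [].
by rewrite -[RHS]imset_id; apply: eq_in_imset => x xA; rewrite restrm_in.
Qed.

Lemma centric_super (A B : {group gT}) : centric S F A -> A \subset B ->
  B \subset S -> centric S F B.
Proof.
move=> [sAS cA] sAB sBS; split=> // g FBg.
have FAg := F_restr FBg sAB.
have eA : restrm A g @: A = g @: A by apply: eq_in_imset => x xA; rewrite restrm_in.
have := cA _ FAg; rewrite eA => sC.
have sgAB : g @: A \subset g @: B by apply: imsetS.
apply: subset_trans (subset_trans _ sC) sgAB.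
apply: setIS; apply: centS; exact: imsetS.
Qed.


Lemma centric_fc (H : fsys gT) (HF : forall A f, H A f -> F A f)
  (B : {group gT}) : centric S F B -> fully_centralized S H B.
Proof.
move=> [sBS cB]; split=> // f HBf.
have FBf := HF _ _ HBf.
have inj := morF_inj FBf.
have e := morFE FBf.
have sZ : 'C_S(f @: B) \subset 'Z(f @: B).
  by rewrite /center subsetI (cB _ FBf) subsetIr.
apply: leq_trans (subset_leq_card sZ) _.
rewrite -e -injm_center // card_injm ?center_sub //.
by apply: subset_leq_card; rewrite /center subsetI subsetIr (subset_trans (subsetIl _ _) sBS).
Qed.


Lemma restrm_perm1 (Q : {set gT}) : restrm Q (1 : {perm gT}) = conjmor Q 1.
Proof. by apply/ffunP=> x; rewrite !ffunE perm1 conjg1. Qed.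

Lemma AutF_gs (Q : {group gT}) : Q \subset S -> group_set (AutF F Q).
Proof.
move=> sQS; apply/group_setP; split.
  by rewrite inE group1 /= restrm_perm1; apply: (fs_conj fsF)...
move=> a b /setIdP[aA Fa] /setIdP[bA Fb].
apply/setIdP; split; first exact: groupM.
have sub : restrm Q a @: Q \subset Q.
  by apply/subsetP=> _ /imsetP[x xQ ->]; rewrite restrm_in // Aut_closed.
have := fs_comp fsF Fa Fb sub.
suff -> : restrm Q (restrm Q b \o restrm Q a) = restrm Q (a * b) by [].
apply/ffunP=> x; rewrite !ffunE; case: ifP => //= xQ.
by rewrite permM !restrm_in // Aut_closed.
Qed.

Lemma AutS_val (Q : {set gT}) a s x : restrm Q a = conjmor Q s -> x \in Q -> a x = x ^ s.
Proof.
move=> e xQ; have := congr1 (fun f : {ffun gT -> gT} => f x) e.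
by rewrite /conjmor !restrm_in.
Qed.

Lemma AutS_gs (Q : {group gT}) : group_set (AutS S Q).
Proof.
apply/group_setP; split.
  apply/setIdP; split; first exact: group1.
  apply/existsP; exists 1; rewrite group1 /=.
  by apply/eqP; rewrite restrm_perm1.
move=> a b /setIdP[aA /existsP[s1 /andP[s1N /eqP e1]]]
  /setIdP[bA /existsP[s2 /andP[s2N /eqP e2]]].
apply/setIdP; split; first exact: groupM.
apply/existsP; exists (s1 * s2); rewrite groupM //=.
apply/eqP/ffunP=> x; rewrite /conjmor !ffunE; case: ifP => //= xQ.
have s1n : s1 \in 'N(Q) by move: s1N; rewrite inE => /andP[].
rewrite permM (AutS_val e1 xQ) (AutS_val e2) ?conjgM //.
by rewrite memJ_norm.
Qed.


Lemma stepA (Q Y : {group gT}) al : F Q al -> Y \subset Q -> Q \subset 'N(Y) ->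
  centric S F Y -> {in Y, forall y, al y = y} ->
  forall u, u \in Q -> u^-1 * al u \in Y.
Proof.
move=> FQa sYQ nYQ cenY fixY u uQ.
apply: (subsetP (centric_subG cenY)).
have uS : u \in S := subsetP (mor_subS FQa) u uQ.
have auS : al u \in S by apply: (subsetP (mor_imS FQa)); apply: imset_f.
rewrite inE groupM ?groupV //=; apply/centP=> y yY.
have uN : u^-1 \in 'N(Y) by rewrite groupV (subsetP nYQ).
set y1 := y ^ u^-1.
have y1Y : y1 \in Y by rewrite /y1 memJ_norm.
have y1Q : y1 \in Q := subsetP sYQ _ y1Y.
have e : y1 ^ al u = y.
  rewrite -(fixY _ y1Y) -(morphJ (morF FQa)) //= /y1 conjgKV.
  exact: fixY.
apply: commute_sym; apply/commgP/conjg_fixP.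
by rewrite conjgM -/y1 e.
Qed.

End Basics.

Section A8.
Variable gT : finGroupType.
Variable S : {group gT}.
Variable F : fsys gT.
Hypothesis fsF : fusion_system S F.
Variable p : nat.
Hypothesis pS : p.-group S.
Hypothesis satI : forall Q : {group gT}, fully_normalized S F Q ->
     fully_centralized S F Q /\ p.-Sylow(AutF F Q) (AutS S Q).

Lemma A8 (Q Y : {group gT}) al : F Q al -> Y \subset Q -> Q \subset 'N(Y) ->
  centric S F Y -> {in Y, forall y, al y = y} ->
  exists2 z, z \in S & al = conjmor Q z.
Proof.
move=> FQa sYQ nYQ cenY fixY.
have sQS : Q \subset S := mor_subS fsF FQa.
have aQ : forall u, u \in Q -> al u \in Q.
  move=> u uQ; have := stepA fsF FQa sYQ nYQ cenY fixY uQ.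
  move/(subsetP sYQ) => wQ; by rewrite -(mulKVg u (al u)) groupM.
(* choose a fully normalized conjugate *)
case: (@arg_maxnP _ (restrm Q id) (fun f => F Q f) (fun f => #|'N_S(f @: Q)|) (F_id fsF sQS))
  => psi Fpsi maxpsi.
set Qs := (morF fsF Fpsi @* Q)%G.
have eQs : Qs :=: psi @: Q by rewrite /Qs /= morFE.
have sQsS : Qs \subset S by rewrite eQs; exact (mor_imS fsF Fpsi).
have fnQ : fully_normalized S F Qs.
  split=> // chi Fchi.
  have sub : psi @: Q \subset Qs by rewrite eQs.
  have := fs_comp fsF Fpsi Fchi sub.
  move=> Fc; have := maxpsi _ Fc.
  by rewrite (F_comp_img Fpsi Fchi sub) -eQs.
case: (fs_inv fsF Fpsi) => psi' [Fpsi' psi'K].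
rewrite -eQs in Fpsi'.
have psiQs : forall x, x \in Q -> psi x \in Qs by move=> x xQ; rewrite eQs imset_f.
have sub1 : psi' @: Qs \subset Q.
  apply/subsetP=> z /imsetP[y yQs ->]; move: yQs; rewrite eQs => /imsetP[x xQ ->].
  by rewrite psi'K.
have Fa1 := fs_comp fsF Fpsi' FQa sub1.
have sub2 : restrm Qs (al \o psi') @: Qs \subset Q.
  apply/subsetP=> z /imsetP[y yQs ->]; move: yQs; rewrite eQs => /imsetP[x xQ ->].
  rewrite restrm_in; last exact: imset_f.
  by rewrite /= psi'K // aQ.
have Fas := fs_comp fsF Fa1 Fpsi sub2.
set als := restrm Qs (psi \o restrm Qs (al \o psi')) in Fas.
have alsE : forall x, x \in Q -> als (psi x) = psi (al x).
  by move=> x xQ; rewrite /als restrm_in ?psiQs //= restrm_in ?psiQs //= psi'K.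
have alsQs : forall y, y \in Qs -> als y \in Qs.
  by move=> y; rewrite {1}eQs => /imsetP[x xQ ->]; rewrite alsE // psiQs // aQ.
set Ys := (morF fsF Fpsi @* Y)%G.
have eYs : Ys :=: psi @: Y by rewrite /Ys /= morphimEsub.
have sYsQs : Ys \subset Qs by apply: morphimS.
have nYsQs : Qs \subset 'N(Ys) by apply: morphim_norms.
have cenYs : centric S F Ys.
  have := centric_img fsF cenY (F_restr fsF Fpsi sYQ).
  suff -> : restrm Y psi @: Y = Ys by [].
  by rewrite eYs; apply: eq_in_imset => x xY; rewrite restrm_in.
have fixYs : {in Ys, forall y, als y = y}.
  move=> y; rewrite eYs => /imsetP[x xY ->].
  by rewrite alsE ?(subsetP sYQ) // fixY.
pose f0 := fun x => if x \in Qs then als x else x.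
have f0inj : injective f0.
  move=> x y; rewrite /f0; case: ifPn => xQ; case: ifPn => yQ.
  - exact: (mor_inj fsF Fas).
  - by move=> e; move: yQ; rewrite -e alsQs.
  - by move=> e; move: xQ; rewrite e alsQs.
  - by [].
pose a := perm f0inj.
have aE : forall x, x \in Qs -> a x = als x by move=> x xQ; rewrite permE /f0 xQ.
have aOut : forall x, x \notin Qs -> a x = x by move=> x xQ; rewrite permE /f0 (negbTE xQ).
have aAut : a \in Aut Qs.
  rewrite inE; apply/andP; split.
    apply/subsetP=> x; rewrite inE; apply: contraR => xQ; by rewrite aOut.
  apply/morphicP=> x y xQ yQ; rewrite !aE ?groupM //.
  exact: (morM fsF Fas).
have raE : restrm Qs a = als.
  apply/ffunP=> x; case: (boolP (x \in Qs)) => xQ.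
    by rewrite restrm_in // aE.
  by rewrite restrm_out // (mor_out fsF Fas).
have aF : a \in AutF F Qs by apply/setIdP; split=> //; rewrite raE.
have wY : forall x, x \in Qs -> x^-1 * als x \in Ys.
  exact: (stepA fsF Fas sYsQs nYsQs cenYs fixYs).
have aX : forall k x, x \in Qs -> (a ^+ k) x = x * (x^-1 * als x) ^+ k.
  move=> k x xQ; elim: k => [|k IH]; first by rewrite expg0 perm1 mulg1.
  have wQ : x^-1 * als x \in Qs := subsetP sYsQs _ (wY x xQ).
  rewrite expgSr permM IH aE ?groupM ?groupX //.
  have mX : als ((x^-1 * als x) ^+ k) = als (x^-1 * als x) ^+ k :=
    morphX (morF fsF Fas) k wQ.
  rewrite (morM fsF Fas) ?groupX // mX.
  by rewrite (fixYs _ (wY x xQ)) expgS mulgA mulKVg.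
have pa : p.-elt a.
  apply: (@pnat_dvd _ #|S|); last exact: pS.
  rewrite order_dvdn; apply/eqP/permP=> x; rewrite perm1.
  case: (boolP (x \in Qs)) => xQ.
    rewrite aX // expg_cardG ?mulg1 //.
    exact: (subsetP (subset_trans sYsQs sQsS) _ (wY x xQ)).
  by rewrite permX_fix // aOut.
pose AF := Group (AutF_gs fsF sQsS).
pose AS := Group (AutS_gs S Qs).
have [_ syl] := satI fnQ.
have sylG : p.-Sylow(AF) AS by [].
have saAF : <[a]> \subset AF by rewrite cycle_subG.
have [c cAF] := Sylow_subJ sylG saAF pa.
rewrite cycle_subG mem_conjg => tAS.
have cAut : c \in Aut Qs by case/setIdP: cAF.
have ciAut : c^-1 \in Aut Qs by rewrite groupV.
have ciAF : c^-1 \in AF by rewrite groupV.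
have Fci : F Qs (restrm Qs c^-1) by case/setIdP: ciAF.
have Fc : F Qs (restrm Qs c) by case/setIdP: cAF.
case/setIdP: tAS => _ /existsP[s /andP[sN /eqP es]].
have tE : forall x, x \in Qs -> c^-1 (a (c x)) = x ^ s.
  move=> x xQ; rewrite -(AutS_val es xQ).
  by rewrite conjgE invgK !permM.
have Fr := F_restr fsF Fci sYsQs.
set Yp := (morF fsF Fr @* Ys)%G.
have eYp : Yp :=: restrm Ys (restrm Qs c^-1) @: Ys by rewrite /Yp /= morFE.
have cenYp : centric S F Yp by rewrite eYp; exact: (centric_img fsF cenYs Fr).
have sS : s \in S by move: sN; rewrite inE => /andP[].
have sYp : s \in Yp.
  apply: (subsetP (centric_subG fsF cenYp)); rewrite inE sS /=.
  apply/centP=> v; rewrite eYp => /imsetP[y yY ->].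
  have yQ : y \in Qs := subsetP sYsQs _ yY.
  rewrite !restrm_in //; apply: commute_sym; apply/commgP/conjg_fixP.
  rewrite -tE ?Aut_closed // permKV aE // fixYs //.
have sQ : s \in Qs.
  move: sYp; rewrite eYp => /imsetP[y yY ->].
  by rewrite !restrm_in ?Aut_closed // (subsetP sYsQs).
have alsC : forall y, y \in Qs -> als y = y ^ c s.
  move=> y yQ; rewrite -aE // -{1}(permKV c y) -{1}(permKV c (a (c (c^-1 y)))).
  rewrite tE ?Aut_closed //.
  have mJ := morphJ (morF fsF Fc) (Aut_closed ciAut yQ) sQ.
  by move: mJ; rewrite /= !restrm_in ?groupJ ?Aut_closed // permKV => ->.
have csQ : c s \in Qs by rewrite Aut_closed.
move: csQ (alsC) ; rewrite {1}eQs => /imsetP[x0 x0Q ->] {}alsC.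
exists x0; first exact: (subsetP sQS).
apply/ffunP=> u; case: (boolP (u \in Q)) => uQ; last first.
  by rewrite /conjmor restrm_out // (mor_out fsF FQa).
rewrite /conjmor restrm_in //.
rewrite -(psi'K _ (aQ _ uQ)) -alsE // alsC ?psiQs //.
have mJ := morphJ (morF fsF Fpsi) uQ x0Q.
by move: mJ; rewrite /= => <-; rewrite psi'K // groupJ.
Qed.

End A8.

Section Main.
Variable gT : finGroupType.
Variable S : {group gT}.
Variables F H : fsys gT.
Hypothesis fsF : fusion_system S F.
Hypothesis fsH : fusion_system S H.
Hypothesis HF : forall A f, H A f -> F A f.
Variable p : nat.
Hypothesis pS : p.-group S.
Hypothesis satF : saturated p S F.
Hypothesis satH : saturated p S H.

Lemma keyM n : forall (X A : {group gT}) psi, #|X| - #|A| < n -> F X psi ->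
  A \subset X -> centric S F A -> H A (restrm A psi) -> H X psi.
Proof.
elim: n => // n IH X A psi hn FXpsi sAX cenA HA.
have sXS := mor_subS fsF FXpsi.
case: (eqVproper sAX) => [eAX | pAX].
  have e : restrm A psi = psi by rewrite eAX; move: (restrm_id fsF FXpsi); exact.
  by move: HA; rewrite e eAX.
have pX : p.-group X := pgroupS sXS pS.
have pA1 := nilpotent_proper_norm (pgroup_nil pX) pAX.
have sA1 : A \subset 'N_X(A) := proper_sub pA1.
case: (eqVproper (subsetIl X 'N(A))) => [eX1 | pX1]; last first.
  have FX1 := F_restr fsF FXpsi (subsetIl X 'N(A)).
  have c1 := proper_card pA1; have c2 := proper_card pX1.
  have c3 := subset_leq_card sAX.
  have HX1 : H 'N_X(A) (restrm 'N_X(A) psi).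
    apply: (IH _ A) => //; first by have h := ltn_sub2r (ltn_trans c1 c2) c2; rewrite ltnS in hn; exact: leq_trans h hn.
    suff -> : restrm A (restrm 'N_X(A) psi) = restrm A psi by [].
    apply/ffunP=> x; case: (boolP (x \in A)) => xA.
      by rewrite !restrm_in // (subsetP sA1).
    by rewrite !restrm_out.
  apply: (IH _ 'N_X(A)%G) => //; first by have h := ltn_sub2l (ltn_trans c1 c2) c1; rewrite ltnS in hn; exact: leq_trans h hn.
    exact: subsetIl.
  exact: (centric_super fsF cenA sA1 (subset_trans (subsetIl _ _) sXS)).
have nAX : X \subset 'N(A) by rewrite -eX1 subsetIr.
have FAphi := HF HA.
set phi := restrm A psi in HA FAphi.
have ephi : phi @: A = psi @: A by apply: eq_in_imset => x xA; rewrite restrm_in.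
set Yg := (morF fsF FAphi @* A)%G.
have eY : Yg :=: phi @: A by rewrite /Yg /= morFE.
have cenY : centric S F Yg by rewrite eY; exact: (centric_img fsF cenA FAphi).
have fcY : fully_centralized S H (phi @: A) by rewrite -eY; exact: (centric_fc fsF HF cenY).
have [g [HNg rg]] := satH.2 A phi HA fcY.
have sXN : X \subset Nphi S A phi.
  apply/subsetP=> x xX; rewrite inE; apply/andP; split.
    by rewrite inE (subsetP sXS) // (subsetP nAX).
  apply/existsP; exists (psi x); apply/andP; split.
    rewrite inE (subsetP (mor_imS fsF FXpsi)) ?imset_f //=.
    rewrite ephi -(morphimEsub (morF fsF FXpsi) sAX).
    apply: (subsetP (morphim_norm (morF fsF FXpsi) A)).
    by apply: mem_morphim => //; rewrite (subsetP nAX).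
  apply/forallP=> y; apply/implyP=> yA.
  have yxA : y ^ x \in A by rewrite memJ_norm // (subsetP nAX).
  rewrite /phi !restrm_in //.
  have mJ := morphJ (morF fsF FXpsi) (subsetP sAX _ yA) xX.
  by rewrite /= in mJ; rewrite mJ.
pose NG := Group (mor_gs fsH HNg).
have HNg' : H NG g := HNg.
have Hk := F_restr fsH HNg' sXN.
set k := restrm X g in Hk.
have kA : forall a, a \in A -> k a = psi a.
  move=> a aA; rewrite /k restrm_in ?(subsetP sAX) //.
  have := congr1 (fun f : {ffun gT -> gT} => f a) rg.
  by rewrite /= /phi !restrm_in.
have Fk := HF Hk.
set Qg := (morF fsF Fk @* X)%G.
have eQ : Qg :=: k @: X by rewrite /Qg /= morFE.
have sQS : Qg \subset S by rewrite eQ; exact: (mor_imS fsF Fk).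
case: (fs_inv fsF Fk) => k' [Fk' k'K].
rewrite -eQ in Fk'.
have sub : k' @: Qg \subset X.
  apply/subsetP=> z /imsetP[y yQ ->]; move: yQ; rewrite eQ => /imsetP[x xX ->].
  by rewrite k'K.
have Fal := fs_comp fsF Fk' FXpsi sub.
set Yk := (morF fsF Fk @* A)%G.
have sYQ : Yk \subset Qg by apply: morphimS.
have nYQ : Qg \subset 'N(Yk) by apply: morphim_norms.
have cenYk : centric S F Yk.
  have := centric_img fsF cenA (F_restr fsF Fk sAX).
  suff -> : restrm A k @: A = Yk by [].
  rewrite /Yk /= morphimEsub //; apply: eq_in_imset => x xA; by rewrite restrm_in.
have fixY : {in Yk, forall y, restrm Qg (psi \o k') y = y}.
  move=> y yY; have yQ := subsetP sYQ _ yY.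
  have eYk : Yk :=: k @: A by rewrite /Yk /= morphimEsub.
  move: yY yQ; rewrite eYk => /imsetP[a aA ->] yQ.
  rewrite restrm_in; last exact: yQ.
  by rewrite /= k'K ?(subsetP sAX) // kA.
have [z zS ez] := A8 fsF pS satF.1 Fal sYQ nYQ cenYk fixY.
have Hc := fs_conj fsH sQS zS.
have sub2 : k @: X \subset Qg by rewrite eQ.
have := fs_comp fsH Hk Hc sub2.
suff -> : restrm X (conjmor Qg z \o k) = psi by [].
apply/ffunP=> x; case: (boolP (x \in X)) => xX; last first.
  by rewrite restrm_out // (mor_out fsF FXpsi).
have kxQ : k x \in Qg by rewrite eQ imset_f.
by rewrite restrm_in //= -ez restrm_in //= k'K.
Qed.

End Main.

Theorem lemma4p2 (gT : finGroupType) (p : nat) (S : {group gT})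
    (F H : fsys gT) (P : {group gT}) :
  prime p -> (p.-group S)%g ->
  fusion_system S F -> saturated p S F ->
  fusion_system S H -> saturated p S H ->
  (forall A f, H A f -> F A f) ->
  fully_normalized S F P ->
  (forall A f, normalizer_fsys S H P A f ->
     fsys_cap (normalizer_fsys S F P) H A f) /\
  (forall (A B : {group gT}) (f : {ffun gT -> gT}),
     A \subset ('N_S(P))%g -> B \subset ('N_S(P))%g ->
     centric S F A -> centric S F B -> [set f x | x in A] \subset B ->
     fsys_cap (normalizer_fsys S F P) H A f = normalizer_fsys S H P A f) /\
  (forall C : {set {group gT}},
     (forall Q : {group gT}, Q \in C -> centric S F Q) ->
     forall R Q : {group gT}, R \in C -> Q \in C ->
       R \subset ('N_S(P))%g -> Q \subset ('N_S(P))%g ->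
       orbit_hom (fsys_cap (normalizer_fsys S F P) H) R Q
       = orbit_hom (normalizer_fsys S H P) R Q).
Proof.
move=> pr pS fsF satF fsH satH HF fnP.
have part1 : forall A f, normalizer_fsys S H P A f ->
    fsys_cap (normalizer_fsys S F P) H A f.
  move=> A f; rewrite /fsys_cap /normalizer_fsys.
  case/and4P=> sA sfA HAf /existsP[g /and4P[Hg sg gP rg]].
  rewrite HAf andbT sA sfA (HF _ _ HAf) /=.
  by apply/existsP; exists g; rewrite (HF _ _ Hg) sg gP rg.
have part2 : forall (A B : {group gT}) (f : {ffun gT -> gT}),
     A \subset ('N_S(P))%g -> B \subset ('N_S(P))%g ->
     centric S F A -> centric S F B -> [set f x | x in A] \subset B ->
     fsys_cap (normalizer_fsys S F P) H A f = normalizer_fsys S H P A f.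
  move=> A B f sAN sBN cenA cenB sfB; apply/idP/idP; last exact: part1.
  rewrite /fsys_cap /normalizer_fsys.
  case/andP=> /and4P[_ sfA FAf /existsP[g /and4P[Fg sg gP rg]]] HAf.
  rewrite sAN sfA HAf /=; apply/existsP; exists g; rewrite sg gP rg !andbT.
  pose AP := Group (mor_gs fsF Fg).
  have HAP : H AP g.
    apply: (@keyM _ S F H fsF fsH HF p pS satF satH (#|AP| - #|A|).+1 AP A g) => //.
      by rewrite mulg_subl.
    by rewrite (eqP rg).
  exact: HAP.
split; first exact: part1.
split; first exact: part2.
move=> C cenC R Q RC QC sR sQ; rewrite /orbit_hom.
suff -> : homset (fsys_cap (normalizer_fsys S F P) H) R Q
          = homset (normalizer_fsys S H P) R Q by [].
apply/setP=> f; rewrite !inE.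
case sub: (f @: R \subset Q); rewrite ?andbF ?andbT //.
exact: (part2 R Q f sR sQ (cenC _ RC) (cenC _ QC) sub).
Qed.
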